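(* Let $l$ be a prime, $\tilde\chi$ a Dirichlet character modulo $l$ with associated character $\chi$, and $f\in S_2^k(\Gamma_0^{(2)}(l),\chi)$. Let $s$ be a symmetric positive definite integral $2\times2$ matrix with $l'=\det(s)$, and let $\hat l$ be an integer with $l\hat l\equiv 1\pmod{l'}$. Let $W_{l'}=\begin{pmatrix}l'&-\hat l\\ ll'&1-l\hat l\end{pmatrix}$. Then \[\phi_s^*(f)\,|\,W_{l'}=\chi\bigl(\det((1-l\hat l)s^{-1})\bigr)\,\phi_s^*f.\]
   Context: $\Gamma_0^{(2)}(l)=\{\begin{pmatrix}A&B\\C&D\end{pmatrix}\in \mathrm{Sp}_4(\mathbb{Z}) : C\equiv 0 \pmod l\}$; for $M=\begin{pmatrix}A&B\\C&D\end{pmatrix}$, $F|_kM(Z)=\det(CZ+D)^{-k}F((AZ+B)(CZ+D)^{-1})$ on the genus 2 Siegel upper half space; $\chi(M)=\tilde\chi(\det D)$, and for an integer $n$ (here $\det((1-l\hat l)s^{-1})=(1-l\hat l)^2/l'$, an integer) $\chi(n)=\tilde\chi(n)$. $S_2^k(\Gamma_0^{(2)}(l),\chi)$ is the space of Siegel cusp forms of degree 2, weight $k$ with $f|_kM=\chi(M)f$ for all $M\in\Gamma_0^{(2)}(l)$. The restriction is $\phi_s^*(f)(\tau)=f(s\tau)$, an elliptic cusp form of weight $2k$ and level $ll'$. For $\gamma=\begin{pmatrix}a&b\\c&d\end{pmatrix}\in\mathrm{GL}_2^+(\mathbb{Q})$, $(g|\gamma)(\tau)=\det(\gamma)^k(c\tau+d)^{-2k}g(\gamma\tau)$.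 *)

(* Defs.v *)
From HB Require Import structures.
From mathcomp Require Import all_boot all_order all_algebra.
From mathcomp Require Import all_classical all_reals all_analysis.
From mathcomp Require Import Rstruct Rstruct_topology.
From mathcomp Require Import complex.
Set Implicit Arguments. Unset Strict Implicit. Unset Printing Implicit Defensive.
Import Order.TTheory GRing.Theory Num.Theory ComplexField.
Import numFieldNormedType.Exports.
Local Open Scope ring_scope.
Local Open Scope classical_set_scope.

Definition RR := Rdefinitions.R.
Notation C := (complex RR).

Definition CRe (z : C) : RR := complex.Re z.
Definition CIm (z : C) : RR := complex.Im z.
Definition Ci : C := (0%R +i* 1%R)%C.
Definition intC (z : int) : C := z%:~R.
Definition intmxC m n (M : 'M[int]_(m, n)) : 'M[C]_(m, n) := map_mx intC M.

Definition H1 (tau : C) : Prop := 0 < CIm tau.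

Definition posdefR (Y : 'M[RR]_2) : Prop :=
  Y^T = Y /\ forall x : 'rV[RR]_2, x != 0 -> 0 < (x *m Y *m x^T) 0 0.

Definition H2 (Z : 'M[C]_2) : Prop := Z^T = Z /\ posdefR (map_mx CIm Z).

Definition Jmx : 'M[int]_(2 + 2) := block_mx 0 1%:M (- 1%:M) 0.
Definition Sp4Z (M : 'M[int]_(2 + 2)) : Prop := M^T *m Jmx *m M = Jmx.
Definition blkA (M : 'M[int]_(2 + 2)) : 'M[int]_2 := ulsubmx M.
Definition blkB (M : 'M[int]_(2 + 2)) : 'M[int]_2 := ursubmx M.
Definition blkC (M : 'M[int]_(2 + 2)) : 'M[int]_2 := dlsubmx M.
Definition blkD (M : 'M[int]_(2 + 2)) : 'M[int]_2 := drsubmx M.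

Definition Gamma0_2 (l : nat) (M : 'M[int]_(2 + 2)) : Prop :=
  Sp4Z M /\ forall i j, (l%:Z %| blkC M i j)%Z.

Definition slash2 (k : nat) (F : 'M[C]_2 -> C) (M : 'M[int]_(2 + 2))
    (Z : 'M[C]_2) : C :=
  let A := intmxC (blkA M) in let B := intmxC (blkB M) in
  let Cc := intmxC (blkC M) in let D := intmxC (blkD M) in
  let N := Cc *m Z + D in
  (\det N ^+ k)^-1 * F ((A *m Z + B) *m invmx N).

Definition dirichlet_char (l : nat) (chi : int -> C) : Prop :=
  [/\ (forall m n : int, chi (m * n) = chi m * chi n),
      (forall n : int, chi (n + l%:Z) = chi n),
      chi 1 = 1 &
      (forall n : int, chi n = 0 <-> ~~ coprimez n l%:Z)].

Definition chiM (chi : int -> C) (M : 'M[int]_(2 + 2)) : C := chi (\det (blkD M)).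

Definition symmx (v : C * C * C) : 'M[C]_2 :=
  \matrix_(i < 2, j < 2)
    (if (i == 0%N :> nat) && (j == 0%N :> nat) then v.1.1
     else if (i == 1%N :> nat) && (j == 1%N :> nat) then v.2 else v.1.2).

(* holomorphy on H2, as a function of the three coordinates z1, z2, z3
   (complex Frechet differentiability over C) *)
Definition holomorphic_H2 (F : 'M[C]_2 -> C) : Prop :=
  forall v : C^o * C^o * C^o, H2 (symmx v) ->
    differentiable ((F \o symmx) : C^o * C^o * C^o -> C^o) v.

Definition diag2 (a b : C) : 'M[C]_2 :=
  \matrix_(i < 2, j < 2)
    (if i == j then (if (i == 0%N :> nat) then a else b) else 0).

(* cusp condition: Siegel Phi operator kills F|_k M for every M in Sp_4(Z):
   lim_{t -> +oo} (F|_k M)(diag(tau, i t)) = 0 for every tau in H1 *)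
Definition cuspidal2 (k : nat) (F : 'M[C]_2 -> C) : Prop :=
  forall M, Sp4Z M -> forall tau : C, H1 tau ->
    ((fun t : RR => slash2 k F M (diag2 tau (Ci * (t%:C)%C))) : RR -> C^o) @ +oo --> (0 : C^o).

Definition siegel_cusp_form (k l : nat) (chi : int -> C) (F : 'M[C]_2 -> C) : Prop :=
  [/\ holomorphic_H2 F,
      (forall M, Gamma0_2 l M -> forall Z, H2 Z -> slash2 k F M Z = chiM chi M * F Z)
    & cuspidal2 k F].

Definition restr (s : 'M[int]_2) (F : 'M[C]_2 -> C) (tau : C) : C :=
  F (tau *: intmxC s).

(* elliptic slash of weight 2k: (g|gamma)(tau) = det(gamma)^k (c tau + d)^(-2k) g(gamma tau) *)
Definition slash1 (k : nat) (g : C -> C) (gam : 'M[int]_2) (tau : C) : C :=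
  let a := intC (gam 0 0) in let b := intC (gam 0 1) in
  let c := intC (gam 1 0) in let d := intC (gam 1 1) in
  intC (\det gam) ^+ k * ((c * tau + d) ^+ (2 * k))^-1 * g ((a * tau + b) / (c * tau + d)).

Definition Wmx (l l' lh : int) : 'M[int]_2 :=
  \matrix_(i < 2, j < 2)
    (if (i == 0%N :> nat) then (if (j == 0%N :> nat) then l' else - lh)
     else (if (j == 0%N :> nat) then l * l' else 1 - l * lh)).

Definition posdefZ (s : 'M[int]_2) : Prop := posdefR (map_mx (fun z : int => (z%:~R : RR)) s).

(* Main.v *)
Require Import Defs.
From HB Require Import structures.
From mathcomp Require Import all_boot all_order all_algebra.
From mathcomp Require Import all_classical all_reals all_analysis.
From mathcomp Require Import Rstruct Rstruct_topology complex.
From mathcomp Require Import ring lra.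
Import Order.TTheory GRing.Theory Num.Theory.
Set Implicit Arguments. Unset Strict Implicit. Unset Printing Implicit Defensive.
Local Open Scope ring_scope.

Section MK2.
Variable R : comNzRingType.
Definition mk2 (a b c d : R) : 'M[R]_2 :=
  \matrix_(i < 2, j < 2)
    (if (i == 0%N :> nat) then (if (j == 0%N :> nat) then a else b)
     else (if (j == 0%N :> nat) then c else d)).

Lemma ord2P (P : 'I_2 -> Prop) : P 0 -> P 1 -> forall i, P i.
Proof.
move=> P0 P1 [[|[|i]] Hi] //.
- by have -> : Ordinal Hi = 0 by apply: val_inj.
- by have -> : Ordinal Hi = 1 by apply: val_inj.
Qed.

Lemma mk2E (M : 'M[R]_2) : M = mk2 (M 0 0) (M 0 1) (M 1 0) (M 1 1).
Proof.
apply/matrixP; apply: ord2P; apply: ord2P; by rewrite !mxE.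
Qed.

Lemma mk2_eq a b c d a' b' c' d' :
  a = a' -> b = b' -> c = c' -> d = d' -> mk2 a b c d = mk2 a' b' c' d'.
Proof. by move=> -> -> -> ->. Qed.

Lemma mk2_mul a b c d a' b' c' d' :
  mk2 a b c d *m mk2 a' b' c' d' =
  mk2 (a*a'+b*c') (a*b'+b*d') (c*a'+d*c') (c*b'+d*d').
Proof.
apply/matrixP; apply: ord2P; apply: ord2P;
  by rewrite !mxE !big_ord_recr big_ord0 /= !mxE /= add0r.
Qed.

Lemma mk2_add a b c d a' b' c' d' :
  mk2 a b c d + mk2 a' b' c' d' = mk2 (a+a') (b+b') (c+c') (d+d').
Proof. apply/matrixP; apply: ord2P; apply: ord2P; by rewrite !mxE. Qed.

Lemma mk2_opp a b c d : - mk2 a b c d = mk2 (-a) (-b) (-c) (-d).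
Proof. apply/matrixP; apply: ord2P; apply: ord2P; by rewrite !mxE. Qed.

Lemma mk2_scale x a b c d : x *: mk2 a b c d = mk2 (x*a) (x*b) (x*c) (x*d).
Proof. apply/matrixP; apply: ord2P; apply: ord2P; by rewrite !mxE. Qed.

Lemma mk2_tr a b c d : (mk2 a b c d)^T = mk2 a c b d.
Proof. apply/matrixP; apply: ord2P; apply: ord2P; by rewrite !mxE. Qed.

Lemma mk2_scalar x : x%:M = mk2 x 0 0 x :> 'M[R]_2.
Proof. apply/matrixP; apply: ord2P; apply: ord2P; by rewrite !mxE. Qed.

Lemma mk2_0 : 0 = mk2 0 0 0 0.
Proof. apply/matrixP; apply: ord2P; apply: ord2P; by rewrite !mxE. Qed.

Lemma mk2_det a b c d : \det (mk2 a b c d) = a * d - b * c.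
Proof.
rewrite (expand_det_row _ 0) !big_ord_recr big_ord0 /= add0r.
rewrite /cofactor !mxE /= !(expand_det_row _ 0) !big_ord_recr !big_ord0 /=.
rewrite /cofactor !det_mx00 !mxE /=. ring.
Qed.
End MK2.

Lemma mk2_map (R S : comNzRingType) (f : R -> S) a b c d :
  map_mx f (mk2 a b c d) = mk2 (f a) (f b) (f c) (f d).
Proof. apply/matrixP; apply: ord2P; apply: ord2P; by rewrite !mxE. Qed.

Lemma ic (z : int) : intC z = ((z%:~R : RR)%:C)%C.
Proof. by rewrite /intC rmorph_int. Qed.

Lemma ImM (t : C) (z : int) : CIm (t * intC z) = CIm t * z%:~R.
Proof. by rewrite ic; case: t => a b; rewrite /CIm /= mulr0 add0r. Qed.

Lemma ImL (t : C) (a b : int) : CIm (intC a * t + intC b) = a%:~R * CIm t.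
Proof. rewrite !ic; case: t => u v; rewrite /CIm /=; ring. Qed.

Definition r2 (R : comNzRingType) (a b : R) : 'rV[R]_2 :=
  \row_(j < 2) (if (j == 0%N :> nat) then a else b).

Lemma r2_quad (R : comNzRingType) (a b p q r t : R) :
  (r2 a b *m mk2 p q r t *m (r2 a b)^T) 0 0 = a * (a * p + b * r) + b * (a * q + b * t).
Proof. rewrite !mxE !big_ord_recr !big_ord0 /= !mxE !big_ord_recr !big_ord0 /= !mxE /=; ring. Qed.

Lemma r2_neq0 (R : comNzRingType) (a b : R) : a != 0 -> r2 a b != 0.
Proof. by move=> Ha; apply/negP => /eqP /matrixP /(_ 0 0); rewrite !mxE /=; apply/eqP. Qed.

Lemma r2_neq0r (R : comNzRingType) (a b : R) : b != 0 -> r2 a b != 0.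
Proof. by move=> Hb; apply/negP => /eqP /matrixP /(_ 0 1); rewrite !mxE /=; apply/eqP. Qed.

Lemma posdef2 (a b c : RR) : posdefR (mk2 a b b c) -> 0 < a /\ 0 < a * c - b * b.
Proof.
case=> _ H.
have Ha : 0 < a.
  have := H (r2 1 0); rewrite r2_quad => /(_ (r2_neq0 _ (oner_neq0 _))).
  by rewrite !mul1r !mul0r !addr0.
split=> //.
have := H (r2 b (-a)); rewrite r2_quad => /(_ (r2_neq0r _ _)).
rewrite oppr_eq0 gt_eqF // => /(_ isT).
have -> : b * (b * a + - a * b) + - a * (b * b + - a * c) = a * (a * c - b * b) by ring.
by rewrite pmulr_rgt0.
Qed.

Lemma intCM a b : intC (a * b) = intC a * intC b. Proof. exact: rmorphM. Qed.
Lemma intCB a b : intC (a - b) = intC a - intC b. Proof. exact: rmorphB. Qed.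
Lemma intCD a b : intC (a + b) = intC a + intC b. Proof. exact: rmorphD. Qed.
Lemma intCN a : intC (- a) = - intC a. Proof. exact: rmorphN. Qed.
Lemma intC1 : intC 1 = 1. Proof. exact: rmorph1. Qed.
Lemma intC0 : intC 0 = 0. Proof. exact: rmorph0. Qed.

Lemma intC_neq0 a : a != 0 -> intC a != 0.
Proof.
move=> Ha; rewrite ic; apply/negP => /eqP [] /eqP; rewrite intr_eq0.
by apply/negP.
Qed.

Lemma CIm0 : CIm 0 = 0. Proof. by []. Qed.

Lemma mk2_det_ne0 (a b c d : C) : a * d - b * c != 0 -> mk2 a b c d \in unitmx.
Proof. by move=> H; rewrite unitmxE mk2_det unitfE. Qed.

Lemma ne0_eq (a b : C) : a = b -> b != 0 -> a != 0.
Proof. by move=> ->. Qed.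

Theorem proposition4p4 (l k : nat) (chi : int -> C) (f : 'M[C]_2 -> C)
    (s : 'M[int]_2) (lh : int) :
  prime l -> dirichlet_char l chi -> siegel_cusp_form k l chi f ->
  s^T = s -> posdefZ s ->
  ((l%:Z * lh)%R = 1 %[mod \det s])%Z ->
  forall tau : C, H1 tau ->
    slash1 k (restr s f) (Wmx l%:Z (\det s) lh) tau
    = chi (((1 - l%:Z * lh) ^+ 2) %/ \det s)%Z * restr s f tau.
Proof.
move=> lP chiD [_ modf _] sT sPD hmod tau Htau.
set x := s 0 0; set y := s 0 1; set z := s 1 1.
have s10 : s 1 0 = y.
  by rewrite /y -{1}sT mxE.
have sE : s = mk2 x y y z by rewrite {1}(mk2E s) s10.
have detS : \det s = x * z - y * y by rewrite sE mk2_det.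
have [_ lp_pos] : 0 < (x%:~R : RR) /\ 0 < (x%:~R * z%:~R - y%:~R * y%:~R : RR).
  apply: (@posdef2 (x%:~R) (y%:~R) (z%:~R)); move: sPD; rewrite /posdefZ sE mk2_map //.
have lp0 : x * z - y * y != 0.
  apply/negP => /eqP H0; move: lp_pos.
  by rewrite -!intrM -intrB H0 ltxx.
have hdv : (x * z - y * y %| 1 - l%:Z * lh)%Z.
  by rewrite -detS -opprB rpredN -eqz_mod_dvd; apply/eqP.
set q := ((1 - l%:Z * lh) %/ (x * z - y * y))%Z.
have hq : 1 - l%:Z * lh = q * (x * z - y * y) by rewrite divzK.
rewrite detS.
have h1 : 1 = q * (x * z - y * y) + l%:Z * lh by rewrite -hq; ring.
have hm1 : -1 = - (q * (x * z - y * y) + l%:Z * lh) by rewrite -h1.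
set M : 'M[int]_(2 + 2) := block_mx (mk2 (-y) x (-z) y) (mk2 0 (-lh) lh 0)
  (mk2 0 l%:Z (-l%:Z) 0) (mk2 (q*y) (q*z) (-(q*x)) (-(q*y))).
have MG : Gamma0_2 l M.
  split.
    rewrite /Sp4Z /Jmx /M tr_block_mx !mk2_tr !mulmx_block.
    rewrite !mk2_0 !mk2_scalar !(mk2_mul, mk2_opp, mk2_add).
    congr block_mx; apply: mk2_eq; first [ring | rewrite [RHS]h1; ring | rewrite [RHS]hm1; ring].
  move=> i j; rewrite /blkC block_mxKdl.
  move: i j; apply: ord2P; apply: ord2P; rewrite mxE /=;
    by rewrite ?dvdz0 ?rpredN ?dvdzz.
have Z2 : H2 (tau *: intmxC s).
  have eI : map_mx CIm (tau *: intmxC s) = CIm tau *: map_mx (fun z : int => z%:~R : RR) s.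
    by apply/matrixP => i j; rewrite !mxE ImM.
  split; first by rewrite /intmxC sE mk2_map mk2_scale mk2_tr.
  rewrite eI; case: sPD => sym pos; split.
    by rewrite sE !mk2_map mk2_scale mk2_tr.
  by move=> v hv; rewrite -scalemxAr -scalemxAl mxE; apply: mulr_gt0 => //; exact: pos.
have key := modf M MG _ Z2.
rewrite /slash2 /chiM /blkA /blkB /blkC /blkD /M block_mxKul block_mxKur block_mxKdl
  block_mxKdr /= in key.
have -> : chi ((1 - l%:Z * lh) ^+ 2 %/ (x * z - y * y))%Z =
   chi (\det (mk2 (q * y) (q * z) (- (q * x)) (- (q * y)))).
  rewrite hq mk2_det.
  have -> : (q * (x * z - y * y)) ^+ 2 = (q * q * (x * z - y * y)) * (x * z - y * y) by ring.
  by rewrite mulzK //; congr chi; ring.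
rewrite /restr -key {key}.
set N := (X in invmx X); set P := (X in X *m invmx _).
set X := intC x; set Y := intC y; set Zc := intC z; set Q := intC q; set Lc := intC l%:Z.
set LH := intC lh.
set u := Lc * tau + Q.
have Lp0 : X * Zc - Y * Y != 0.
  by rewrite /X /Y /Zc -!intCM -intCB intC_neq0.
have u0 : u != 0.
  apply/negP => /eqP u0; move: (ImL tau l%:Z q); rewrite -/Lc -/Q -/u u0 CIm0 => /esym/eqP.
  rewrite mulf_eq0 intr_eq0 gt_eqF //= ?gt_eqF //.
  by rewrite ltz_nat prime_gt0.
have eN : N = mk2 (u * Y) (u * Zc) (- (u * X)) (- (u * Y)).
  rewrite /N /intmxC sE !mk2_map !mk2_scale !mk2_mul !mk2_add -/X -/Y -/Zc.
  rewrite !(intCM, intCB, intCD, intCN, intC0, intC1) -/X -/Y -/Zc -/Q -/Lc.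
  by apply: mk2_eq; rewrite /u; ring.
have NU : N \in unitmx.
  rewrite eN; apply: mk2_det_ne0; apply: (@ne0_eq _ (u ^+ 2 * (X * Zc - Y * Y))); first ring.
  by rewrite mulf_neq0 // expf_neq0.
have dN : \det N = u ^+ 2 * (X * Zc - Y * Y) by rewrite eN mk2_det; ring.
set w := ((X * Zc - Y * Y) * tau - LH) / ((X * Zc - Y * Y) * u).
have eP : P = (w *: intmxC s) *m N.
  rewrite eN /P /intmxC sE !mk2_map !mk2_scale !mk2_mul !mk2_add.
  rewrite !(intCM, intCB, intCD, intCN, intC0, intC1) -/X -/Y -/Zc -/Q -/Lc -/LH.
  by apply: mk2_eq; rewrite /w; field; apply/andP; split.
rewrite eP mulmxK // dN.
have eW : Wmx l%:Z (x * z - y * y) lh = mk2 (x * z - y * y) (- lh) (l%:Z * (x * z - y * y)) (1 - l%:Z * lh).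
  by apply/matrixP; apply: ord2P; apply: ord2P; rewrite !mxE.
rewrite /slash1 eW mk2_det !mxE /=.
have -> : (x * z - y * y) * (1 - l%:Z * lh) - - lh * (l%:Z * (x * z - y * y)) = x * z - y * y by ring.
rewrite hq !(intCM, intCB, intCD, intCN, intC0, intC1) -/X -/Y -/Zc -/Q -/Lc -/LH.
set Lp := X * Zc - Y * Y.
have eD : Lc * Lp * tau + Q * Lp = Lp * u by rewrite /u; ring.
have ew : (Lp * tau - LH) / (Lc * Lp * tau + Q * Lp) = w by rewrite eD.
rewrite ew eD; congr (_ * _).
rewrite exprM (_ : (Lp * u) ^+ 2 = Lp * (u ^+ 2 * Lp)); last by ring.
rewrite exprMn invfM mulrA mulfV ?mul1r //.
by rewrite expf_neq0.
Qed.
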